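(* For every integer $n\ge 0$, $$\Phi^{(2)}[a; b, b'; cq^{-n}, c'; x, y] = \frac{1}{(q/c; q)_n} \sum_{k=0}^n \begin{bmatrix} n \\ k \end{bmatrix} (-c)^{k-n} q^{\binom{n+1-k}{2}} \Phi^{(2)}[a; b, b'; c, c'; xq^k, y]$$ and $$\Phi^{(2)}[a; b, b'; cq^n, c'; x, y] = \sum_{k=0}^n \begin{bmatrix} n \\ k \end{bmatrix} c^k q^{2\binom{k}{2}} (cq^k; q)_{n-k}\, \Phi^{(2)}[a; b, b'; cq^k, c'; xq^k, y].$$
   Context: Let $q$ be a complex number with $0<|q|<1$. For complex $z$ and integer $m\ge 0$, $(z;q)_m=\prod_{j=0}^{m-1}(1-zq^j)$, with $(z;q)_0=1$. For integers $0\le k\le n$, $\begin{bmatrix} n \\ k \end{bmatrix}=\frac{(q;q)_n}{(q;q)_k(q;q)_{n-k}}$ is the $q$-binomial coefficient, and $\binom{j}{2}=j(j-1)/2$. The $q$-Appell function $\Phi^{(2)}$ is $$\Phi^{(2)}[a; b, b'; c, c'; x, y] = \sum_{m, n \geq 0} \frac{(a; q)_{m+n} (b; q)_m (b'; q)_n}{(q; q)_m (q; q)_n (c; q)_m (c'; q)_n} x^m y^n.$$ Identities are understood as identities of power series in $x,y$ (formal, or convergent for small $|x|,|y|$), with complex parameters chosen so that no denominator occurring vanishes. *)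

(* Defs.v *)
From HB Require Import structures.
From mathcomp Require Import all_boot all_order all_algebra.
From mathcomp Require Import complex.
From mathcomp Require Import Rstruct.
From Stdlib Require Rdefinitions.
Set Implicit Arguments. Unset Strict Implicit. Unset Printing Implicit Defensive.
Import Order.TTheory GRing.Theory Num.Theory.
Local Open Scope ring_scope.

Notation Cplx := (Rdefinitions.R[i]).

Definition qpoch (z q : Cplx) (m : nat) : Cplx := \prod_(j < m) (1 - z * q ^+ j).

Definition qbinom (q : Cplx) (n k : nat) : Cplx :=
  qpoch q q n / (qpoch q q k * qpoch q q (n - k)).

(* A formal power series in x, y over C, represented by its coefficient
   function: F m n is the coefficient of x^m y^n. *)
Definition fps2 := nat -> nat -> Cplx.

Definition Phi2 (q a b b' c c' : Cplx) : fps2 := fun m n =>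
  qpoch a q (m + n) * qpoch b q m * qpoch b' q n /
  (qpoch q q m * qpoch q q n * qpoch c q m * qpoch c' q n).

(* Substitution x |-> x t : the series F(x t, y). *)
Definition subst_x (F : fps2) (t : Cplx) : fps2 := fun m n => F m n * t ^+ m.

(* Main.v *)
Require Import Defs.
From HB Require Import structures.
From mathcomp Require Import all_boot all_order all_algebra.
From mathcomp Require Import complex.
From mathcomp Require Import Rstruct.
From Stdlib Require Rdefinitions.
From mathcomp Require Import ring zify.
Import Order.TTheory GRing.Theory Num.Theory.
Local Open Scope ring_scope.
Lemma qpochS d q m : qpoch d q m.+1 = qpoch d q m * (1 - d * q ^+ m).
Proof. by rewrite /qpoch big_ord_recr. Qed.

Lemma qpochSl d q m : qpoch d q m.+1 = (1 - d) * qpoch (d * q) q m.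
Proof.
rewrite /qpoch big_ord_recl /= expr0 mulr1; congr (_ * _).
by apply: eq_bigr => i _; rewrite /bump /= add1n exprS mulrA.
Qed.

Lemma qpoch_step d q m : (1 - d) * qpoch (d * q) q m = qpoch d q m * (1 - d * q ^+ m).
Proof. by rewrite -qpochS -qpochSl. Qed.

Lemma qQ_neq0 {q : Cplx} k : 0 < `|q| < 1 -> qpoch q q k != 0.
Proof.
case/andP=> q0 q1; apply/prodf_neq0 => i _.
rewrite subr_eq0; apply/eqP => h.
have : `|q * q ^+ i| < 1 by rewrite -exprS normrX exprn_ilt1 // ltW.
by rewrite -h normr1 ltxx.
Qed.

Lemma pascal1 (q : Cplx) n k : 0 < `|q| < 1 -> (k < n)%N ->
  qbinom q n.+1 k.+1 = qbinom q n k + q ^+ k.+1 * qbinom q n k.+1.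
Proof.
move=> hq kn; have Q := fun j => qQ_neq0 j hq.
have [l ->] : exists l, n = (k + l.+1)%N by exists (n - k.+1)%N; lia.
rewrite /qbinom.
have -> : ((k + l.+1).+1 - k.+1 = l.+1)%N by lia.
have -> : ((k + l.+1) - k = l.+1)%N by lia.
have -> : ((k + l.+1) - k.+1 = l)%N by lia.
have h1 := Q k.+1; have h2 := Q l.+1; have h3 := Q (k + l.+1)%N.+1.
rewrite !qpochS in h1 h2 h3 *.
move: h1 h2 h3; rewrite !mulf_eq0 !negb_or => /andP[a1 a2] /andP[b1 b2] /andP[c1 c2].
rewrite !exprS !exprD !exprS in c2 *.
field; by rewrite a1 a2 b1 b2.
Qed.

Lemma sum_shift (g f B X : nat -> Cplx) n :
  g 0%N = B 0%N -> f n = B n.+1 ->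
  (forall k, (k < n)%N -> g k.+1 + f k = B k.+1) ->
  \sum_(k < n.+1) g k * X k + \sum_(k < n.+1) f k * X k.+1 =
  \sum_(k < n.+2) B k * X k.
Proof.
move=> h0 hn hk.
rewrite big_ord_recl [in RHS]big_ord_recl [in RHS]big_ord_recr /=.
rewrite [\sum_(k < n.+1) f k * _]big_ord_recr /= h0 -hn.
rewrite -!addrA; congr (_ + _); rewrite addrA; congr (_ + _).
rewrite -big_split /=; apply: eq_bigr => i _.
by rewrite /bump /= add1n -mulrDl hk.
Qed.

Lemma G_step (d q : Cplx) m : qpoch d q m != 0 -> qpoch (d * q) q m != 0 ->
  (qpoch (d * q) q m)^-1 =
  (1 - d) * (qpoch d q m)^-1 + d * q ^+ m * (qpoch (d * q) q m)^-1.
Proof.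
move=> x0 y0; have e := qpoch_step d q m.
have -> : (1 - d) * (qpoch d q m)^-1 = (1 - d * q ^+ m) * (qpoch (d * q) q m)^-1.
  rewrite -{1}[1 - d](mulfK y0) e; field; by rewrite x0 y0.
ring.
Qed.

Lemma qbinom_n0 (q : Cplx) n : 0 < `|q| < 1 -> qbinom q n 0 = 1.
Proof.
move=> hq; rewrite /qbinom subn0 {2}/qpoch big_ord0 mul1r divff //.
exact: qQ_neq0.
Qed.

Lemma qbinom_nn (q : Cplx) n : 0 < `|q| < 1 -> qbinom q n n = 1.
Proof.
move=> hq; rewrite /qbinom subnn {3}/qpoch big_ord0 mulr1 divff //.
exact: qQ_neq0.
Qed.

Lemma second_scalar (q : Cplx) m n : 0 < `|q| < 1 -> forall c,
  (forall k, (k <= n)%N -> qpoch (c * q ^+ k) q m != 0) ->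
  (qpoch (c * q ^+ n) q m)^-1 =
  \sum_(k < n.+1) qbinom q n k * c ^+ k * q ^+ (2 * 'C(k, 2)) *
     qpoch (c * q ^+ k) q (n - k) * ((q ^+ k) ^+ m * (qpoch (c * q ^+ k) q m)^-1).
Proof.
move=> hq; elim: n => [|n IH] c hc.
  rewrite big_ord1 qbinom_n0 // /= /qpoch big_ord0 !expr1n !mul1r.
  done.
have hc' : forall k, (k <= n)%N -> qpoch (c * q * q ^+ k) q m != 0.
  by move=> k kn; rewrite -mulrA -exprS hc.
rewrite exprS mulrA IH //.
set X := fun k => (q ^+ k) ^+ m * (qpoch (c * q ^+ k) q m)^-1.
pose B := fun k => qbinom q n.+1 k * c ^+ k * q ^+ (2 * 'C(k, 2)) *
     qpoch (c * q ^+ k) q (n.+1 - k).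
rewrite (eq_bigr (fun k : 'I_n.+2 => B k * X k)) //.
rewrite -(@sum_shift
  (fun k => qbinom q n k * (c*q) ^+ k * q ^+ (2 * 'C(k, 2)) *
     qpoch (c * q * q ^+ k) q (n - k) * (1 - c * q ^+ k))
  (fun k => qbinom q n k * (c*q) ^+ k * q ^+ (2 * 'C(k, 2)) *
     qpoch (c * q * q ^+ k) q (n - k) * (c * q ^+ k)) B X n).
- rewrite -big_split /=; apply: eq_bigr => i _.
  have K : (q ^+ i) ^+ m * (qpoch (c * q * q ^+ i) q m)^-1 =
     (1 - c * q ^+ i) * X i + c * q ^+ i * X i.+1.
    have e1 : c * q * q ^+ i = c * q ^+ i * q by rewrite mulrAC.
    have e2 : c * q ^+ i.+1 = c * q ^+ i * q by rewrite exprSr mulrA.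
    have i1 : (i <= n.+1)%N by exact: ltnW (ltn_ord i).
    have i2 : (i.+1 <= n.+1)%N by exact: ltn_ord i.
    rewrite /X e1 e2 {1}(@G_step (c * q ^+ i)) ?hc -?e2 ?hc //.
    rewrite exprSr exprMn; ring.
  rewrite K; ring.
- rewrite /B qbinom_n0 // qbinom_n0 // !expr0 !mulr1 !subn0.
  by rewrite qpochSl !mul1r mulrC.
- rewrite /B !qbinom_nn // subnn /qpoch !big_ord0 !mulr1 binS bin1 mulnDr exprD.
  rewrite exprMn exprS subnn big_ord0 mulr1 (mul2n n) -addnn exprD; ring.
- move=> k kn; rewrite /B; have [l ->] : exists l, n = (k + l.+1)%N by exists (n - k.+1)%N; lia.
  have -> : ((k + l.+1).+1 - k.+1 = l.+1)%N by lia.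
  have -> : ((k + l.+1) - k = l.+1)%N by lia.
  have -> : ((k + l.+1) - k.+1 = l)%N by lia.
  have e1 : c*q*q^+k.+1 = c*q^+k.+1*q by rewrite mulrAC.
  have e2 : c*q*q^+k = c*q^+k.+1 by rewrite exprS mulrA.
  rewrite /B pascal1 //; last by lia.
  rewrite e1 e2 (qpochSl (c*q^+k.+1)) binS bin1 mulnDr exprD !exprMn.
  rewrite (exprS q k) (exprS c k) (mul2n k) -addnn exprD; ring.
Qed.

Definition coef1 (q c : Cplx) n k := qbinom q n k * (- c) ^- (n - k) * q ^+ 'C(n.+1 - k, 2).

Lemma first_scalar (q : Cplx) m : 0 < `|q| < 1 -> forall c, c != 0 -> forall n,
  qpoch (q / c) q n * qpoch c q m =
  (\sum_(k < n.+1) coef1 q c n k * (q ^+ k) ^+ m) * qpoch (c * q ^- n) q m.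
Proof.
move=> hq c c0; have q0 : q != 0 by rewrite -normr_gt0; case/andP: hq.
elim=> [|n IH].
  rewrite big_ord1 /coef1 qbinom_n0 // /qpoch !big_ord0 /= expr0 invr1 mulr1 !mul1r.
  by rewrite expr1n mul1r; apply: eq_bigr => i _; rewrite mulr1.
rewrite qpochS mulrAC IH.
set d := c * q ^- n.+1.
have ed : c * q ^- n = d * q.
  rewrite /d exprSr; field; by rewrite q0 expf_neq0.
rewrite ed.
have key : (1 - q / c * q ^+ n) * qpoch (d * q) q m =
    (- (q ^+ n.+1 / c)) * ((1 - d) * qpoch (d * q) q m).
  rewrite /d exprS; field; by rewrite c0 q0 expf_neq0.
rewrite -(mulrA _ (qpoch (d * q) q m)) [qpoch (d * q) q m * _]mulrC key qpoch_step.
set Sn := \sum_(k < n.+1) _.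
have E := @sum_shift (fun k => coef1 q c n k * (- (q ^+ n.+1 / c)))
   (coef1 q c n) (coef1 q c n.+1) (fun k => (q ^+ k) ^+ m) n.
rewrite -E.
- have -> : \sum_(k < n.+1) coef1 q c n k * - (q ^+ n.+1 / c) * q ^+ k ^+ m =
      Sn * - (q ^+ n.+1 / c).
    by rewrite mulr_suml; apply: eq_bigr => i _; rewrite mulrAC.
  have -> : \sum_(k < n.+1) coef1 q c n k * q ^+ k.+1 ^+ m = Sn * q ^+ m.
    by rewrite mulr_suml; apply: eq_bigr => i _; rewrite exprSr exprMn mulrA.
  rewrite /d; field; by rewrite c0 expf_neq0.
- rewrite /coef1 !qbinom_n0 // !subn0 (binS n.+1 1) bin1 exprD (exprS (- c) n) invfM invrN.
  ring.
- rewrite /coef1 !qbinom_nn // !subnn subSS subSnn.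
- move=> k kn; have [l ->] : exists l, n = (k + l.+1)%N by exists (n - k.+1)%N; lia.
  rewrite /coef1 pascal1 //; last by lia.
  have -> : ((k + l.+1) - k.+1 = l)%N by lia.
  have -> : ((k + l.+1).+1 - k.+1 = l.+1)%N by lia.
  have -> : ((k + l.+1) - k = l.+1)%N by lia.
  have -> : ((k + l.+1).+1 - k = l.+2)%N by lia.
  have -> : ((k + l.+1).+2 - k.+1 = l.+2)%N by lia.
  rewrite (binS l.+1 1) bin1 exprD (exprS (- c) l) invfM invrN.
  rewrite (exprS q (k + l.+1)) exprD (exprS q k); ring.
Qed.

From Stdlib Require Import FunctionalExtensionality.

Lemma Phi2_split q a b b' c c' m p :
  Phi2 q a b b' c c' m p =
  qpoch a q (m + p) * qpoch b q m * qpoch b' q p /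
    (qpoch q q m * qpoch q q p * qpoch c' q p) * (qpoch c q m)^-1.
Proof. rewrite /Phi2 !invfM; ring. Qed.

Theorem theorem10 (q a b b' c c' : Cplx) (n : nat) :
  0 < `|q| < 1 ->
  ((c != 0 ->
    (forall m, qpoch (c * q ^- n) q m != 0) ->
    (forall m, qpoch c q m != 0) ->
    (forall m, qpoch c' q m != 0) ->
    qpoch (q / c) q n != 0 ->
    Phi2 q a b b' (c * q ^- n) c' =
    (fun m p => (qpoch (q / c) q n)^-1 *
       \sum_(k < n.+1) qbinom q n k * (- c) ^- (n - k) * q ^+ 'C(n.+1 - k, 2) *
         subst_x (Phi2 q a b b' c c') (q ^+ k) m p))
  /\
   ((forall k m, (k <= n)%N -> qpoch (c * q ^+ k) q m != 0) ->
    (forall m, qpoch c' q m != 0) ->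
    Phi2 q a b b' (c * q ^+ n) c' =
    (fun m p =>
       \sum_(k < n.+1) qbinom q n k * c ^+ k * q ^+ (2 * 'C(k, 2)) *
         qpoch (c * q ^+ k) q (n - k) *
         subst_x (Phi2 q a b b' (c * q ^+ k) c') (q ^+ k) m p))).
Proof.
move=> hq; split.
- move=> c0 h1 h2 _ h3; apply: functional_extensionality => m.
  apply: functional_extensionality => p.
  rewrite /subst_x Phi2_split.
  set K := qpoch a q (m + p) * _ * _ / _.
  have F := first_scalar q m hq c c0 n.
  set S := \sum_(k < n.+1) _ in F.
  have eS : S = qpoch (q / c) q n * qpoch c q m / qpoch (c * q ^- n) q m.
    by rewrite F mulfK.
  rewrite (eq_bigr (fun k : 'I_n.+1 => coef1 q c n k * (q ^+ k) ^+ m *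
      (K * (qpoch c q m)^-1))); last first.
    by move=> i _; rewrite Phi2_split -/K /coef1; ring.
  rewrite -mulr_suml -/S eS; field.
  by rewrite h1 h2 h3.
- move=> hc _; apply: functional_extensionality => m.
  apply: functional_extensionality => p.
  rewrite Phi2_split (@second_scalar q m n hq c (fun k hk => hc k m hk)) mulr_sumr.
  apply: eq_bigr => i _; rewrite /subst_x Phi2_split; ring.
Qed.
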